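(* Let $R$ be a commutative ring with finitely many minimal prime ideals which is a multiplication ring; equivalently, $R\cong \prod_{i=1}^{n} D_{i}$ is a finite direct product of rings where each $D_{i}$ is either a Dedekind domain or an Artinian, local principal ideal ring. Let $1=e_1+\cdots+e_n$ be the corresponding decomposition of $1$ into central orthogonal idempotents of $R$ (so $e_iR\cong D_i$). Let $M$ be an $R$-module and write $M=\bigoplus_{i=1}^n M_i$ where $M_i:=e_iM$ (a $D_i$-module). Then $M$ is a multiplication $R$-module if and only if for each $i=1,\ldots,n$ the $D_i$-module $M_i$ is isomorphic to $D_i$, or to $D_i/I_i$ for some nonzero ideal $I_i$ of $D_i$, or (only in the case when $D_i$ is a Dedekind domain) to a nonzero ideal of $D_i$.
   Context: All rings are commutative with $1$ and all modules are unital. A ring $R$ is a multiplication ring if whenever $I,J$ are ideals of $R$ with $J\subseteq I$, there is an ideal $I'$ of $R$ with $J=I'I$. An $R$-module $M$ is a multiplication module if every submodule of $M$ equals $IM$ for some ideal $I$ of $R$. *)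

(* Defs.v *)
(* Ideals and submodules are represented as Prop-valued
   predicates (R -> Prop, M -> Prop); the factor rings D_i are represented
   internally as the corner rings e_i R of R (identity element e_i). *)
From HB Require Import structures.
From mathcomp Require Import all_boot all_order all_algebra.
Set Implicit Arguments.
Unset Strict Implicit.
Unset Printing Implicit Defensive.
Import GRing.Theory.
Local Open Scope ring_scope.

Section Defs.
Variable R : comNzRingType.

Definition ideal (I : R -> Prop) : Prop :=
  I 0 /\ (forall x y, I x -> I y -> I (x + y)) /\ (forall r x, I x -> I (r * x)).

Definition ideal_mul (I J : R -> Prop) (x : R) : Prop :=
  exists (k : nat) (a b : 'I_k -> R),
    (forall t, I (a t) /\ J (b t)) /\ x = \sum_(t < k) a t * b t.

Definition multiplication_ring : Prop :=
  forall I J : R -> Prop, ideal I -> ideal J -> (forall x, J x -> I x) ->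
    exists I' : R -> Prop, ideal I' /\ forall x, J x <-> ideal_mul I' I x.

Definition prime_ideal (P : R -> Prop) : Prop :=
  ideal P /\ ~ P 1 /\ (forall x y, P (x * y) -> P x \/ P y).

Definition minimal_prime (P : R -> Prop) : Prop :=
  prime_ideal P /\
  forall Q, prime_ideal Q -> (forall x, Q x -> P x) -> forall x, P x -> Q x.

Definition finitely_many_minimal_primes : Prop :=
  exists (k : nat) (P : 'I_k -> R -> Prop),
    forall Q, minimal_prime Q -> exists t, forall x, Q x <-> P t x.

Definition corner (e : R) (x : R) : Prop := exists r, x = e * r.

(* ideals of the ring eR (equivalently: ideals of R contained in eR) *)
Definition ideal_of (e : R) (I : R -> Prop) : Prop :=
  I 0 /\ (forall x y, I x -> I y -> I (x + y)) /\
  (forall r x, corner e r -> I x -> I (r * x)) /\ (forall x, I x -> corner e x).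

Definition nonzero_ideal (I : R -> Prop) : Prop := exists x, I x /\ x != 0.

Definition corner_domain (e : R) : Prop :=
  e != 0 /\ forall x y, corner e x -> corner e y -> x * y = 0 -> x = 0 \/ y = 0.

Definition corner_noetherian (e : R) : Prop :=
  forall I, ideal_of e I ->
    exists (k : nat) (g : 'I_k -> R), (forall t, I (g t)) /\
      forall x, I x <-> exists c : 'I_k -> R,
                  (forall t, corner e (c t)) /\ x = \sum_(t < k) c t * g t.

Definition corner_prime (e : R) (P : R -> Prop) : Prop :=
  ideal_of e P /\ ~ P e /\
  (forall x y, corner e x -> corner e y -> P (x * y) -> P x \/ P y).

Definition corner_maximal (e : R) (P : R -> Prop) : Prop :=
  ideal_of e P /\ ~ P e /\
  forall J, ideal_of e J -> (forall x, P x -> J x) -> ~ J e -> forall x, J x -> P x.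

Definition corner_dim_le1 (e : R) : Prop :=
  forall P, corner_prime e P -> nonzero_ideal P -> corner_maximal e P.

(* eR integrally closed (in its fraction field): if a/b (b <> 0) is a root of a
   monic polynomial of degree k over eR, i.e.
   a^k + sum_{t<k} c_t a^t b^(k-t) = 0, then b divides a in eR. *)
Definition corner_integrally_closed (e : R) : Prop :=
  forall a b, corner e a -> corner e b -> b != 0 ->
    (exists (k : nat) (c : 'I_k -> R), (forall t, corner e (c t)) /\
       a ^+ k + \sum_(t < k) c t * a ^+ t * b ^+ (k - t) = 0) ->
    exists d, corner e d /\ a = d * b.

Definition corner_dedekind (e : R) : Prop :=
  corner_domain e /\ corner_noetherian e /\ corner_dim_le1 e /\
  corner_integrally_closed e.

Definition corner_artinian (e : R) : Prop :=
  forall I : nat -> R -> Prop, (forall t, ideal_of e (I t)) ->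
    (forall t x, I t.+1 x -> I t x) ->
    exists N, forall t, (N <= t)%N -> forall x, I t x <-> I N x.

Definition corner_local (e : R) : Prop :=
  exists P, corner_maximal e P /\
    forall Q, corner_maximal e Q -> forall x, Q x <-> P x.

Definition corner_pir (e : R) : Prop :=
  forall I, ideal_of e I -> exists a, I a /\
    forall x, I x <-> exists r, corner e r /\ x = r * a.

Definition corner_artinian_local_pir (e : R) : Prop :=
  corner_artinian e /\ corner_local e /\ corner_pir e.

Variable M : lmodType R.

Definition submodule (N : M -> Prop) : Prop :=
  N 0 /\ (forall x y, N x -> N y -> N (x + y)) /\ (forall r x, N x -> N (r *: x)).

Definition ideal_smul (I : R -> Prop) (x : M) : Prop :=
  exists (k : nat) (r : 'I_k -> R) (m : 'I_k -> M),
    (forall t, I (r t)) /\ x = \sum_(t < k) r t *: m t.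

Definition multiplication_module : Prop :=
  forall N, submodule N -> exists I, ideal I /\ forall x, N x <-> ideal_smul I x.

Definition component (e : R) (x : M) : Prop := exists m, x = e *: m.

End Defs.

(* A (given as a subset of V) and B (subset of W) are isomorphic as modules over
   the scalar ring S (a subset of R, here S = eR): there is a bijection A -> B
   which is additive and S-linear. *)
Definition iso_on (R : comNzRingType) (V W : lmodType R) (S : R -> Prop)
    (A : V -> Prop) (B : W -> Prop) : Prop :=
  exists f : V -> W,
    (forall x, A x -> B (f x)) /\
    (forall x y, A x -> A y -> f (x + y) = f x + f y) /\
    (forall a x, S a -> A x -> f (a *: x) = a *: f x) /\
    (forall x y, A x -> A y -> f x = f y -> x = y) /\
    (forall y, B y -> exists x, A x /\ f x = y).

(* B is isomorphic (over S) to the quotient A / I: there is a surjective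
   additive S-linear map A -> B whose kernel is exactly I (the isomorphism
   A/I ~ B being the induced map). *)
Definition quot_iso_on (R : comNzRingType) (V W : lmodType R) (S : R -> Prop)
    (A : V -> Prop) (I : V -> Prop) (B : W -> Prop) : Prop :=
  exists f : V -> W,
    (forall x, A x -> B (f x)) /\
    (forall x y, A x -> A y -> f (x + y) = f x + f y) /\
    (forall a x, S a -> A x -> f (a *: x) = a *: f x) /\
    (forall x, A x -> (f x = 0 <-> I x)) /\
    (forall y, B y -> exists x, A x /\ f x = y).

(* Main.v *)
Require Import Defs.
From HB Require Import structures.
From mathcomp Require Import all_boot all_order all_algebra.
From Stdlib Require Import Classical ClassicalEpsilon.
Import GRing.Theory.
Local Open Scope ring_scope.
Set Implicit Arguments.
Unset Strict Implicit.
Unset Printing Implicit Defensive.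


Section Basics.
Variables (R : comNzRingType) (M : lmodType R).

Lemma ideal_sum (I : R -> Prop) k (F : 'I_k -> R) :
  ideal I -> (forall t, I (F t)) -> I (\sum_(t < k) F t).
Proof. case=> h0 [hD _] hF; apply: big_ind => //. Qed.

Lemma submodule_sum (N : M -> Prop) k (F : 'I_k -> M) :
  submodule N -> (forall t, N (F t)) -> N (\sum_(t < k) F t).
Proof. case=> h0 [hD _] hF; apply: big_ind => //. Qed.

Lemma ideal_opp (I : R -> Prop) x : ideal I -> I x -> I (- x).
Proof. case=> _ [_ hM] hx; rewrite -mulN1r; exact: hM. Qed.

Lemma submodule_opp (N : M -> Prop) x : submodule N -> N x -> N (- x).
Proof. case=> _ [_ hM] hx; rewrite -scaleN1r; exact: hM. Qed.

Lemma ideal_smul0 I : ideal_smul I (0 : M).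
Proof.
exists 0%N, (fun _ => 0), (fun _ => 0); split; first by case.
by rewrite big_ord0.
Qed.

Lemma ideal_smul1 I r (m : M) : I r -> ideal_smul I (r *: m).
Proof.
move=> hr; exists 1%N, (fun _ => r), (fun _ => m); split => //.
by rewrite big_ord1.
Qed.

Lemma ideal_smulD I (x y : M) : ideal_smul I x -> ideal_smul I y -> ideal_smul I (x + y).
Proof.
move=> [k1 [r1 [m1 [h1 ->]]]] [k2 [r2 [m2 [h2 ->]]]].
exists (k1 + k2)%N.
exists (fun t => match split t with inl a => r1 a | inr b => r2 b end).
exists (fun t => match split t with inl a => m1 a | inr b => m2 b end).
split.
  by move=> t; case: (split t).
rewrite big_split_ord /=; congr (_ + _);
  apply: eq_bigr => i _.
- by have := unsplitK (inl i : 'I_k1 + 'I_k2) => /= ->.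
- by have := unsplitK (inr i : 'I_k1 + 'I_k2) => /= ->.
Qed.

Lemma ideal_smul_sum I k (F : 'I_k -> M) :
  (forall t, ideal_smul I (F t)) -> ideal_smul I (\sum_(t < k) F t).
Proof.
move=> hF; apply: (big_ind (ideal_smul I)) => //.
- exact: ideal_smul0.
- by move=> x y; apply: ideal_smulD.
Qed.

Lemma ideal_smulZ I a (x : M) : ideal I -> ideal_smul I x -> ideal_smul I (a *: x).
Proof.
move=> [_ [_ hM]] [k [r [m [h ->]]]].
exists k, (fun t => a * r t), m; split; first by move=> t; exact: hM.
by rewrite scaler_sumr; apply: eq_bigr => t _; rewrite scalerA.
Qed.

Lemma ideal_smul_mono (I J : R -> Prop) (x : M) :
  (forall r, I r -> J r) -> ideal_smul I x -> ideal_smul J x.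
Proof. by move=> hIJ [k [r [m [h ->]]]]; exists k, r, m; split => // t; exact: hIJ. Qed.

Lemma ideal_smulB I (x y : M) : ideal I -> ideal_smul I x -> ideal_smul I y -> ideal_smul I (x - y).
Proof.
move=> hI hx hy; apply: ideal_smulD => //; rewrite -scaleN1r; exact: ideal_smulZ.
Qed.

Lemma ideal_smul_sub (I : R -> Prop) (N : M -> Prop) (x : M) :
  submodule N -> (forall r m, I r -> N (r *: m)) -> ideal_smul I x -> N x.
Proof.
move=> hN hIN [k [r [m [h ->]]]]; apply: submodule_sum => // t; exact: hIN.
Qed.

Lemma ideal_mul1 (I J : R -> Prop) a b : I a -> J b -> ideal_mul I J (a * b).
Proof.
move=> ha hb; exists 1%N, (fun _ => a), (fun _ => b); split => //.
by rewrite big_ord1.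
Qed.

Lemma ideal_mul_sub (I J K : R -> Prop) x : ideal K ->
  (forall a b, I a -> J b -> K (a * b)) -> ideal_mul I J x -> K x.
Proof.
move=> hK hIJ [k [a [b [h ->]]]]; apply: ideal_sum => // t.
by case: (h t) => ha hb; exact: hIJ.
Qed.

Variable e : R.
Hypothesis He : e * e = e.

Lemma cornerK x : corner e x -> e * x = x.
Proof. by case=> r ->; rewrite mulrA He. Qed.

Lemma cornerKr x : corner e x -> x * e = x.
Proof. by move=> h; rewrite mulrC cornerK. Qed.

Lemma corner_mull x y : corner e y -> corner e (x * y).
Proof. by case=> r ->; exists (x * r); rewrite mulrCA. Qed.

Lemma corner_mulr x y : corner e x -> corner e (x * y).
Proof. by move=> h; rewrite mulrC; exact: corner_mull. Qed.

Lemma corner_e : corner e e.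
Proof. by exists 1; rewrite mulr1. Qed.

Lemma corner_me x : corner e (x * e).
Proof. apply: corner_mull; exact: corner_e. Qed.

Lemma corner_em x : corner e (e * x).
Proof. by exists x. Qed.

Lemma corner0 : corner e 0.
Proof. by exists 0; rewrite mulr0. Qed.

Lemma cornerD x y : corner e x -> corner e y -> corner e (x + y).
Proof. by case=> a -> [b ->]; exists (a + b); rewrite mulrDr. Qed.

Lemma cornerN x : corner e x -> corner e (- x).
Proof. by case=> a ->; exists (- a); rewrite mulrN. Qed.

Lemma cornerB x y : corner e x -> corner e y -> corner e (x - y).
Proof. by move=> hx hy; apply: cornerD => //; exact: cornerN. Qed.

Lemma corner_sum k (F : 'I_k -> R) : (forall t, corner e (F t)) -> corner e (\sum_(t < k) F t).
Proof. move=> hF; apply: big_ind => //; [exact: corner0 | exact: cornerD]. Qed.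

Lemma ideal_of_ideal I : ideal_of e I -> ideal I.
Proof.
case=> h0 [hD [hM hC]]; split => //; split => // r x hx.
have := hC _ hx => /cornerK <-; rewrite mulrA; apply: hM => //; exact: corner_me.
Qed.

Lemma ideal_of_corner : ideal_of e (corner e).
Proof.
split; first exact: corner0.
split; first exact: cornerD.
split => //; move=> r x _; exact: corner_mull.
Qed.

Lemma componentK (m : M) : component e m -> e *: m = m.
Proof. by case=> m' ->; rewrite scalerA He. Qed.

Lemma componentZ r (m : M) : component e m -> component e (r *: m).
Proof. by case=> m' ->; exists (r *: m'); rewrite !scalerA mulrC. Qed.

Lemma component_e (m : M) : component e (e *: m).
Proof. by exists m. Qed.

Lemma component0 : component e (0 : M).
Proof. by exists 0; rewrite scaler0. Qed.

Lemma componentD (x y : M) : component e x -> component e y -> component e (x + y).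
Proof. by case=> a -> [b ->]; exists (a + b); rewrite scalerDr. Qed.

Lemma componentN (x : M) : component e x -> component e (- x).
Proof. by case=> a ->; exists (- a); rewrite scalerN. Qed.

Lemma componentB (x y : M) : component e x -> component e y -> component e (x - y).
Proof. by move=> hx hy; apply: componentD => //; exact: componentN. Qed.

Lemma component_sum k (F : 'I_k -> M) : (forall t, component e (F t)) -> component e (\sum_(t < k) F t).
Proof. move=> hF; apply: big_ind => //; [exact: component0 | exact: componentD]. Qed.

Lemma ideal_of_smul_component I (x : M) : ideal_of e I -> ideal_smul I x -> component e x.
Proof.
case=> _ [_ [_ hC]] [k [r [m [h ->]]]]; apply: component_sum => t.
have := hC _ (h t) => /cornerK <-; rewrite -scalerA; exact: component_e.
Qed.

End Basics.


Section Dir1.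
Variables (R : comNzRingType) (M : lmodType R).

Definition good_comp (e : R) : Prop :=
  exists (A : R -> Prop) (g : R -> M), ideal_of e A /\
    (forall x, A x -> component e (g x)) /\
    (forall x y, A x -> A y -> g (x + y) = g x + g y) /\
    (forall a x, corner e a -> A x -> g (a * x) = a *: g x) /\
    (forall y, component e y -> exists x, A x /\ g x = y).

Lemma g_sum (A : R -> Prop) (g : R -> M) k (F : 'I_k -> R) :
  ideal A -> (forall x y, A x -> A y -> g (x + y) = g x + g y) ->
  (forall t, A (F t)) -> g (\sum_(t < k) F t) = \sum_(t < k) g (F t).
Proof.
move=> hA hg hF.
have g0 : g 0 = 0.
  case: hA => h0 _; have := hg 0 0 h0 h0; rewrite addr0 -{1}[g 0]addr0 => /addrI <-.
  done.
pose K y1 y2 := A y1 /\ g y1 = y2.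
have: K (\sum_(t < k) F t) (\sum_(t < k) g (F t)).
  apply: (big_rec2 K); first by split => //; case: hA.
  move=> i y1 y2 _ [hy1 <-]; split; first by case: hA => _ [hD _]; apply: hD.
  by rewrite hg.
by case.
Qed.

Lemma comp_piece (e : R) (N : M -> Prop) (y : M) :
  multiplication_ring R -> e * e = e -> good_comp e -> submodule N -> N y ->
  component e y -> ideal_smul (fun r => forall m, N (r *: m)) y.
Proof.
move=> hmr He [A [g [hA [hgc [hgD [hgZ hgS]]]]]] hN hy hyc.
have hAi := ideal_of_ideal He hA.
have hAc : forall x, A x -> corner e x by case: hA => _ [_ [_ ]].
have g0 : g 0 = 0.
  case: hAi => h0 _; have := hgD 0 0 h0 h0; rewrite addr0 -{1}[g 0]addr0 => /addrI <-.
  done.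
have hgR : forall r c, A c -> A (r * c) /\ g (r * c) = (r * e) *: g c.
  move=> r c hc; have <- : (r * e) * c = r * c by rewrite -mulrA (cornerK He) //; apply: hAc.
  split; last by apply: hgZ => //; exact: corner_me.
  by case: hA => _ [_ [hM _]]; apply: hM => //; exact: corner_me.
pose P c := A c /\ N (g c).
have hP : ideal P.
  split; first by split; [case: hAi | rewrite g0; case: hN].
  split.
    move=> x z [hx nx] [hz nz]; split; first by case: hAi => _ [hD _]; apply: hD.
    by rewrite hgD //; case: hN => _ [hD _]; apply: hD.
  move=> r x [hx nx]; have [h1 h2] := hgR r x hx; split => //.
  by rewrite h2; case: hN => _ [_ hM]; apply: hM.
have [b [hb gb]] := hgS y hyc.
have [I' [hI' hPI]] := hmr A P hAi hP (fun x (h : P x) => proj1 h).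
have : P b by split => //; rewrite gb.
move=> /hPI [k [a [c [hac hb']]]].
rewrite -gb hb' (g_sum hAi hgD); last first.
  by move=> t; case: (hac t) => _ hc; case: hAi => _ [_ hM]; apply: hM.
apply: ideal_smul_sum => t; case: (hac t) => ha hc.
rewrite (proj2 (hgR _ _ hc)); apply: ideal_smul1 => m.
have [c' [hc' gc']] := hgS (e *: m) (component_e e m).
rewrite -scalerA -gc'.
have <- : g (a t * c') = a t *: g c'.
  rewrite (proj2 (hgR _ _ hc')) -scalerA (componentK He) //; exact: hgc.
have : P (a t * c') by apply/hPI; exact: ideal_mul1.
by case.
Qed.

Lemma mult_of_good n (e : 'I_n -> R) :
  multiplication_ring R -> (forall i, e i * e i = e i) -> \sum_(i < n) e i = 1 ->
  (forall i, good_comp (e i)) -> multiplication_module M.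
Proof.
move=> hmr He hsum hg N hN.
exists (fun r => forall m, N (r *: m)); split.
  split; first by move=> m; rewrite scale0r; case: hN.
  split.
    move=> x y hx hy m; rewrite scalerDl; case: hN => _ [hD _]; apply: hD; [apply: hx | apply: hy].
  by move=> r x hx m; rewrite -scalerA; case: hN => _ [_ hM]; apply: hM.
move=> x; split; last by apply: ideal_smul_sub.
move=> hx; have -> : x = \sum_(i < n) e i *: x by rewrite -scaler_suml hsum scale1r.
apply: ideal_smul_sum => i; apply: (comp_piece hmr (He i) (hg i) hN).
  by case: hN => _ [_ hM]; apply: hM.
exact: component_e.
Qed.

End Dir1.


Section Ring.
Variables (R : comNzRingType) (e : R).
Hypothesis He : e * e = e.

Definition subs (I J : R -> Prop) := forall x, I x -> J x.

Lemma pir_noeth : corner_pir e -> corner_noetherian e.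
Proof.
move=> hp I hI; have [a [ha hI']] := hp I hI.
exists 1%N, (fun _ => a); split => // x; rewrite hI'; split.
  by case=> r [hr ->]; exists (fun _ => r); rewrite big_ord1.
by case=> c [hc ->]; exists (c ord0); rewrite big_ord1.
Qed.

Lemma MEL : corner_noetherian e -> forall F : (R -> Prop) -> Prop,
  (exists J, F J) -> (forall J, F J -> ideal_of e J) ->
  exists J, F J /\ forall J', F J' -> subs J J' -> subs J' J.
Proof.
move=> hN F [J0 hJ0] hFi; apply: NNPP => hno.
have step : forall J, F J -> exists J', F J' /\ subs J J' /\ ~ subs J' J.
  move=> J hJ; apply: NNPP => h1; apply: hno; exists J; split => // J' hJ' hJJ'.
  apply: NNPP => h2; apply: h1; by exists J'.
pose next (J : R -> Prop) := epsilon (inhabits J)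
  (fun J' => F J -> F J' /\ subs J J' /\ ~ subs J' J).
have hnext : forall J, F J -> F (next J) /\ subs J (next J) /\ ~ subs (next J) J.
  move=> J hJ; apply: (epsilon_spec (inhabits J)
     (fun J' => F J -> F J' /\ subs J J' /\ ~ subs J' J)) => //.
  by have [J' hJ'] := step J hJ; exists J' => _.
pose sq k := iter k next J0.
have hF : forall k, F (sq k) by elim=> [|k IH] //=; case: (hnext _ IH).
have hmono : forall i j, (i <= j)%N -> subs (sq i) (sq j).
  move=> i j; elim: j => [|j IH].
    by rewrite leqn0 => /eqP ->.
  rewrite leq_eqVlt => /orP [/eqP -> //| hij] x hx.
  by case: (hnext _ (hF j)) => _ [h _]; apply: h; apply: IH.
pose U x := exists k, sq k x.
have hU : ideal_of e U.
  split; first by exists 0%N; case: (hFi _ (hF 0%N)).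
  split.
    move=> x y [i hi] [j hj]; exists (maxn i j).
    case: (hFi _ (hF (maxn i j))) => _ [hD _]; apply: hD.
      by apply: (hmono i) => //; rewrite leq_maxl.
    by apply: (hmono j) => //; rewrite leq_maxr.
  split.
    move=> r x hr [i hi]; exists i; case: (hFi _ (hF i)) => _ [_ [hM _]].
    exact: hM.
  by move=> x [i hi]; case: (hFi _ (hF i)) => _ [_ [_ hC]]; apply: hC.
have [k0 [g [hg hgU]]] := hN U hU.
pose kf t := epsilon (inhabits 0%N) (fun k => sq k (g t)).
have hkf : forall t, sq (kf t) (g t).
  move=> t; apply: (epsilon_spec (inhabits 0%N) (fun k => sq k (g t))).
  exact: hg.
pose NN := \max_(t < k0) kf t.
have hNN : forall t, sq NN (g t).
  move=> t; apply: (hmono (kf t)) => //; exact: (leq_bigmax_cond t).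
have : subs (sq NN.+1) (sq NN).
  move=> x hx; have : U x by exists NN.+1.
  move=> /hgU [c [hc ->]]; case: (hFi _ (hF NN)) => hS0 [hSD [hSM _]].
  apply: big_ind => // t _; exact: hSM.
by case: (hnext _ (hF NN)) => _ [_ h].
Qed.

Lemma exists_max I : corner_noetherian e -> ideal_of e I -> ~ I e ->
  exists P, corner_maximal e P /\ subs I P.
Proof.
move=> hN hI hIe.
have [P [[hP [hIP hPe]] hmax]] := MEL hN
  (F := fun J => ideal_of e J /\ subs I J /\ ~ J e)
  (ex_intro _ I (conj hI (conj (fun x h => h) hIe))) (fun J h => proj1 h).
exists P; split => //; split => //; split => // J hJ hPJ hJe.
apply: hmax => //; split => //; split => // x hx; apply: hPJ; exact: hIP.
Qed.

Lemma max_gen P c : corner_maximal e P -> corner e c -> ~ P c ->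
  exists d p, corner e d /\ P p /\ e = d * c + p.
Proof.
move=> [hP [hPe hmax]] hc hPc.
pose K w := exists d p, corner e d /\ P p /\ w = d * c + p.
have hK : ideal_of e K.
  case: hP => h0 [hD [hM hC]].
  split; first by exists 0, 0; split; [exact: corner0 | split => //; rewrite mul0r addr0].
  split.
    move=> x y [d1 [p1 [h1 [h1' ->]]]] [d2 [p2 [h2 [h2' ->]]]].
    exists (d1 + d2), (p1 + p2); split; first exact: cornerD.
    split; first exact: hD.
    by rewrite mulrDl addrACA.
  split.
    move=> r x hr [d [p [hd [hp ->]]]]; exists (r * d), (r * p).
    split; first exact: corner_mull.
    split; first exact: hM.
    by rewrite mulrDr mulrA.
  move=> x [d [p [hd [hp ->]]]]; apply: cornerD; last exact: hC.
  exact: corner_mulr.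
apply: NNPP => hno.
have hKe : ~ K e by move=> [d [p [hd [hp he]]]]; apply: hno; exists d, p.
have := hmax K hK; rewrite /=.
move=> /(_ _ hKe) hKP.
apply: hPc; apply: hKP; [| exists e, 0; split; [exact: corner_e | split; [by case: hP|]]].
  by move=> x hx; exists 0, x; split; [exact: corner0|split => //; rewrite mul0r add0r].
by rewrite addr0 cornerK.
Qed.

End Ring.


Section Mod.
Variables (R : comNzRingType) (M : lmodType R) (e : R).
Hypothesis He : e * e = e.

Lemma scale_e a (w : M) : corner e a -> a *: w = a *: (e *: w).
Proof. by move=> ha; rewrite scalerA cornerKr. Qed.

Definition Jx (z : M) (r : R) : Prop :=
  corner e r /\ forall m, component e m -> exists c, r *: m = c *: z.

Lemma Jx_ideal z : ideal_of e (Jx z).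
Proof.
split; first by split; [exact: corner0 | move=> m _; exists 0; rewrite !scale0r].
split.
  move=> x y [hx Hx] [hy Hy]; split; first exact: cornerD.
  move=> m hm; have [c1 h1] := Hx m hm; have [c2 h2] := Hy m hm.
  by exists (c1 + c2); rewrite !scalerDl h1 h2.
split.
  move=> r x hr [hx Hx]; split; first exact: corner_mull.
  move=> m hm; have [c h] := Hx m hm; exists (r * c).
  by rewrite -!scalerA h.
by move=> x [].
Qed.

Lemma Jx_gen z : multiplication_module M -> component e z -> ideal_smul (Jx z) z.
Proof.
move=> hmm hz.
pose N w := exists c, w = c *: z.
have hN : submodule N.
  split; first by exists 0; rewrite scale0r.
  split; first by move=> x y [c1 ->] [c2 ->]; exists (c1 + c2); rewrite scalerDl.
  by move=> r x [c ->]; exists (r * c); rewrite scalerA.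
have [I [hI hNI]] := hmm N hN.
have : N z by exists 1; rewrite scale1r.
move=> /hNI [k [r [m [hr hz']]]].
have hz2 : z = \sum_(t < k) (e * r t) *: m t.
  rewrite -{1}(componentK He hz) {1}hz' scaler_sumr.
  by apply: eq_bigr => t _; rewrite scalerA.
rewrite {2}hz2.
exists k, (fun t => e * r t), m; split => //.
move=> t; split; first exact: corner_em.
move=> m' hm'; have : N (r t *: m') by apply/hNI; exact: ideal_smul1.
case=> c hc; exists c; rewrite mulrC -scalerA (componentK He hm'); exact: hc.
Qed.

Definition opt1 := iso_on (V := R^o) (W := M) (corner e) (corner e) (@component R M e).
Definition opt2 := exists I : R -> Prop, ideal_of e I /\ nonzero_ideal I /\
           quot_iso_on (V := R^o) (W := M) (corner e) (corner e) I (@component R M e).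

Lemma cyclic_options (x : M) : component e x ->
  (forall m, component e m -> exists c, m = c *: x) -> opt1 \/ opt2.
Proof.
move=> hx hgen.
have hsurj : forall y, component e y -> exists r, corner e r /\ r *: x = y.
  move=> y hy; have [c ->] := hgen y hy; exists (c * e); split; first exact: corner_me.
  by rewrite -scalerA (componentK He hx).
case: (classic (exists r, corner e r /\ r *: x = 0 /\ r != 0)) => [[r0 [hr0 [hr0x hr0n]]]|hno].
  right; exists (fun r => corner e r /\ r *: x = 0); split.
    split; first by split; [exact: corner0 | rewrite scale0r].
    split; first by move=> a b [ha hax] [hb hbx]; split; [exact: cornerD| rewrite scalerDl hax hbx addr0].
    split; first by move=> a b ha [hb hbx]; split; [exact: corner_mull | rewrite -scalerA hbx scaler0].
    by move=> a [].
  split; first by exists r0.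
  exists (fun r : R^o => (r : R) *: x); split; first by move=> r _; exact: componentZ.
  split; first by move=> a b _ _; rewrite scalerDl.
  split; first by move=> a b _ _; rewrite scalerA.
  split; first by move=> r hr; split => [h|[]//]; split.
  exact: hsurj.
left; exists (fun r : R^o => (r : R) *: x); split; first by move=> r _; exact: componentZ.
split; first by move=> a b _ _; rewrite scalerDl.
split; first by move=> a b _ _; rewrite scalerA.
split; last exact: hsurj.
move=> a b ha hb hab; apply: NNPP => hn; apply: hno; exists (a - b); split; first exact: cornerB.
split; first by rewrite scalerBl hab subrr.
by rewrite subr_eq0; apply/eqP.
Qed.

End Mod.


Section Local.
Variables (R : comNzRingType) (M : lmodType R) (e : R).
Hypothesis He : e * e = e.

Lemma local_cyclic : multiplication_module M -> corner_artinian_local_pir e ->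
  exists x : M, component e x /\ forall m, component e m -> exists c, m = c *: x.
Proof.
move=> hmm [hart [[P [hPmax hPun]] hpir]].
have hN := pir_noeth hpir.
have hPi : ideal_of e P by case: hPmax.
have hPe : ~ P e by case: hPmax => _ [].
have [pi [hpi hPpi]] := hpir P hPi.
have hpic : corner e pi by case: hPi => _ [_ [_ hC]]; apply: hC.
have unit : forall u, corner e u -> ~ P u -> exists v, corner e v /\ v * u = e.
  move=> u hu hPu.
  pose J x := exists r, corner e r /\ x = r * u.
  have hJ : ideal_of e J.
    split; first by exists 0; rewrite mul0r; split => //; exact: corner0.
    split; first by move=> x y [r1 [h1 ->]] [r2 [h2 ->]]; exists (r1 + r2); rewrite mulrDl; split => //; exact: cornerD.
    split; first by move=> r x hr [r1 [h1 ->]]; exists (r * r1); rewrite mulrA; split => //; exact: corner_mull.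
    by move=> x [r1 [h1 ->]]; exact: corner_mulr.
  case: (classic (J e)) => [[v [hv hve]]|hJe]; first by exists v.
  have [Q [hQ hJQ]] := exists_max hN hJ hJe.
  exfalso; apply: hPu; apply/(hPun Q hQ); apply: hJQ; exists e; split; first exact: corner_e.
  by rewrite cornerK.
have [NN hNN] : exists N, pi ^+ N = 0.
  pose I t x := exists r, corner e r /\ x = r * pi ^+ t.
  have hI : forall t, ideal_of e (I t).
    move=> t; split; first by exists 0; rewrite mul0r; split => //; exact: corner0.
    split; first by move=> x y [r1 [h1 ->]] [r2 [h2 ->]]; exists (r1 + r2); rewrite mulrDl; split => //; exact: cornerD.
    split; first by move=> r x hr [r1 [h1 ->]]; exists (r * r1); rewrite mulrA; split => //; exact: corner_mull.
    by move=> x [r1 [h1 ->]]; exact: corner_mulr.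
  have hdesc : forall t x, I t.+1 x -> I t x.
    move=> t x [r [hr ->]]; exists (r * pi); split; first exact: corner_mulr.
    by rewrite exprS mulrA.
  have [N0 hN0] := hart I hI hdesc.
  have : I N0.+1 (e * pi ^+ N0) by apply/(hN0 N0.+1 (leqnSn N0)); exists e; split => //; exact: corner_e.
  case=> r [hr hrx].
  set u := e - r * pi.
  have hu : corner e u by apply: cornerB; [exact: corner_e | exact: corner_mulr].
  have hPu : ~ P u.
    move=> hPu'; apply: hPe; have -> : e = u + r * pi by rewrite /u subrK.
    case: hPi => _ [hD [hM _]]; apply: hD => //; apply: hM => //.
  have [v [hv hvu]] := unit u hu hPu.
  have h0 : u * (e * pi ^+ N0) = 0.
    rewrite /u mulrBl mulrA He.
    rewrite -(mulrA r pi) (mulrA pi e) (cornerKr He hpic) (mulrA r) -(mulrA r pi) -exprS -hrx.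
    by rewrite subrr.
  have h1 : e * pi ^+ N0 = 0.
    have -> : e * pi ^+ N0 = e * (e * pi ^+ N0) by rewrite mulrA He.
    by rewrite -{1}hvu -mulrA h0 mulr0.
  exists N0.+1; rewrite exprS -{1}(cornerKr He hpic) -mulrA h1 mulr0 //.
have hsm : forall m : M, ideal_smul P m -> exists w, m = pi *: w.
  move=> m [k [p [mm [hp ->]]]].
  pose K := fun w : M => exists w', w = pi *: w'.
  have : K (\sum_(t < k) p t *: mm t); last by [].
  apply: big_ind.
  - by exists 0; rewrite scaler0.
  - by move=> a b [a' ->] [b' ->]; exists (a' + b'); rewrite scalerDr.
  - move=> t _; have [r [hr ->]] := (proj1 (hPpi (p t))) (hp t).
    by exists (r *: mm t); rewrite scalerA mulrC.
case: (classic (exists x : M, component e x /\ ~ ideal_smul P x)) => [[x [hx hxP]]|hall].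
  exists x; split => //.
  have [k [j [mm [hj hxs]]]] := Jx_gen He hmm hx.
  have [t hjt] : exists t, ~ P (j t).
    apply: NNPP => hno; apply: hxP; exists k, j, mm; split => // t.
    by apply: NNPP => h; apply: hno; exists t.
  have [hjc hjJ] := hj t.
  have [d [p [hd [hp hed]]]] := max_gen He hPmax hjc hjt.
  have step1 : forall m, component e m -> exists c (m1 : M), component e m1 /\ m = c *: x + pi *: m1.
    move=> m hm; have [c hc] := hjJ m hm.
    have [r [hr hpr]] := (proj1 (hPpi p)) hp.
    exists (d * c), (r *: m); split; first exact: componentZ.
    rewrite -{1}(componentK He hm) hed scalerDl -scalerA hc scalerA hpr.
    by rewrite !scalerA (mulrC r pi).
  have stepk : forall n m, component e m -> exists c (m1 : M), component e m1 /\ m = c *: x + pi ^+ n *: m1.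
    elim=> [|n IH] m hm.
      by exists 0, m; split => //; rewrite scale0r add0r expr0 scale1r.
    have [c [m1 [hm1 ->]]] := IH m hm.
    have [c1 [m2 [hm2 ->]]] := step1 m1 hm1.
    exists (c + pi ^+ n * c1), m2; split => //.
    by rewrite scalerDr !scalerA exprSr scalerDl addrA.
  move=> m hm; have [c [m1 [_ ->]]] := stepk NN m hm.
  by exists c; rewrite hNN scale0r addr0.
exists 0; split; first exact: component0.
have hallP : forall m : M, component e m -> ideal_smul P m.
  by move=> m hm; apply: NNPP => h; apply: hall; exists m.
have stepk : forall n (m : M), component e m -> exists m1, component e m1 /\ m = pi ^+ n *: m1.
  elim=> [|n IH] m hm; first by exists m; rewrite expr0 scale1r.
  have [m1 [hm1 ->]] := IH m hm.
  have [w hw] := hsm m1 (hallP m1 hm1).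
  exists (e *: w); split; first exact: component_e.
  have hw2 : m1 = pi *: (e *: w) by rewrite hw -(scale_e He w hpic).
  by rewrite hw2 scalerA exprSr.
move=> m hm; have [m1 [_ ->]] := stepk NN m hm.
by exists 0; rewrite hNN !scale0r.
Qed.

End Local.


Section DedRing.
Variables (R : comNzRingType) (e : R).
Hypothesis He : e * e = e.
Hypothesis hdom : corner_domain e.
Hypothesis hmr : multiplication_ring R.

Lemma CL (I P : R -> Prop) a : ideal I -> I a -> corner e a -> a != 0 -> ideal_of e P ->
  (forall x, I x -> ideal_mul I P x) -> P e.
Proof.
move=> hI hIa hac ha0 hP hIP.
pose aR w := exists r, w = a * r.
have haR : ideal aR.
  split; first by exists 0; rewrite mulr0.
  split; first by move=> x y [r1 ->] [r2 ->]; exists (r1 + r2); rewrite mulrDr.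
  by move=> r x [r1 ->]; exists (r * r1); rewrite mulrCA.
have hsub : forall x, aR x -> I x.
  by move=> x [r ->]; rewrite mulrC; case: hI => _ [_ hM]; apply: hM.
have [I2 [hI2 hI2e]] := hmr hI haR hsub.
have : aR a by exists 1; rewrite mulr1.
move=> /hI2e [k [c [d [hcd ha]]]].
have hPi := ideal_of_ideal He hP.
have hPc : forall x, P x -> corner e x by case: hP => _ [_ [_ hC]].
pose Q w := exists q, P q /\ w = a * q.
have hQ0 : Q 0 by exists 0; split; [case: hPi | rewrite mulr0].
have hQD : forall x y, Q x -> Q y -> Q (x + y).
  move=> x y [q1 [h1 ->]] [q2 [h2 ->]]; exists (q1 + q2); split; last by rewrite mulrDr.
  by case: hPi => _ [hD _]; apply: hD.
have : Q (\sum_(t < k) c t * d t); last rewrite -ha.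
  apply: big_ind => // t _; case: (hcd t) => hc hd.
  have [k2 [f [g [hfg ->]]]] := hIP _ hd.
  rewrite mulr_sumr; apply: big_ind => // s _; case: (hfg s) => hf hg.
  have : aR (c t * f s) by apply/hI2e; exact: ideal_mul1.
  case=> r hr; exists (r * g s); split; last by rewrite mulrA hr mulrA.
  by case: hPi => _ [_ hM]; apply: hM.
case=> q [hq haq].
have h0 : a * (e - q) = 0 by rewrite mulrBr (cornerKr He hac) -haq subrr.
case: hdom => _ hd.
case: (hd _ _ hac (cornerB (corner_e e) (hPc _ hq)) h0) => [ha'|].
  by move/eqP: ha0.
by move/eqP; rewrite subr_eq0 => /eqP ->.
Qed.

Lemma max_prime (Q P I1 : R -> Prop) : corner_maximal e Q -> corner_maximal e P -> ideal I1 ->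
  (forall w, ideal_mul I1 P w -> Q w) -> ~ subs (fun r => I1 r /\ corner e r) Q ->
  forall x, Q x <-> P x.
Proof.
move=> hQm hPm hI1 hQI hn.
have [c [[hc1 hcc] hQc]] : exists c, (I1 c /\ corner e c) /\ ~ Q c.
  by apply: NNPP => h; apply: hn => x hx; apply: NNPP => h'; apply: h; exists x.
have [d [q [hd [hq hed]]]] := max_gen He hQm hcc hQc.
have hQi : ideal_of e Q by case: hQm.
have hPQ : forall p, P p -> Q p.
  move=> p hp; have hpc : corner e p by case: hPm => [[_ [_ [_ hC]]] _]; apply: hC.
  rewrite -(cornerK He hpc) hed mulrDl -mulrA.
  case: hQi => _ [hD [hM _]]; apply: hD.
    by apply: hM => //; apply: hQI; exact: ideal_mul1.
  by rewrite mulrC; apply: hM.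
move=> x; split; last exact: hPQ.
case: hPm => _ [_ hmax]; apply: hmax => //; by case: hQm => _ [].
Qed.

End DedRing.

Section DedMod.
Variables (R : comNzRingType) (M : lmodType R) (e : R).
Hypothesis He : e * e = e.
Hypothesis hdom : corner_domain e.
Hypothesis hmr : multiplication_ring R.
Hypothesis hN : corner_noetherian e.
Hypothesis hmm : multiplication_module M.
Hypothesis hT : forall x : M, component e x -> exists s, corner e s /\ s != 0 /\ s *: x = 0.

Definition Ann (r : R) := corner e r /\ forall m : M, component e m -> r *: m = 0.

Lemma Ann_ideal : ideal_of e Ann.
Proof.
split; first by split; [exact: corner0 | move=> m _; rewrite scale0r].
split.
  move=> x y [hx Hx] [hy Hy]; split; first exact: cornerD.
  by move=> m hm; rewrite scalerDl Hx // Hy // addr0.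
split.
  move=> r x hr [hx Hx]; split; first exact: corner_mull.
  by move=> m hm; rewrite -scalerA Hx // scaler0.
by move=> x [].
Qed.

Lemma Ann_nz : exists a, Ann a /\ a != 0.
Proof.
case: (classic (exists x : M, component e x /\ x != 0)) => [[x [hx hx0]]|hno].
  have [k [j [mm [hj hxs]]]] := Jx_gen He hmm hx.
  have [t hjt] : exists t, j t != 0.
    apply: NNPP => h; move/eqP: hx0; apply; rewrite hxs big1 // => t _.
    have -> : j t = 0 by apply/eqP; apply: NNPP => h'; apply: h; exists t; apply/negP.
    by rewrite scale0r.
  have [s [hs [hs0 hsx]]] := hT hx.
  have [hjc hjJ] := hj t.
  exists (s * j t); split.
    split; first exact: corner_mulr.
    move=> m hm; have [c hc] := hjJ m hm.
    by rewrite -scalerA hc scalerA mulrC -scalerA hsx scaler0.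
  apply/eqP => h; case: hdom => _ hd; case: (hd _ _ hs hjc h) => /eqP; by apply/negP.
exists e; split; last by case: hdom.
split; first exact: corner_e.
move=> m hm; have -> : m = 0; last by rewrite scaler0.
by apply/eqP; apply: NNPP => h; apply: hno; exists m; split => //; apply/negP.
Qed.

Lemma F6 P : corner_maximal e P -> subs Ann P -> exists y : M, component e y /\ ~ ideal_smul P y.
Proof.
move=> hPm hAP; apply: NNPP => hno.
have hall : forall y : M, component e y -> ideal_smul P y.
  by move=> y hy; apply: NNPP => h; apply: hno; exists y.
have hPi : ideal_of e P by case: hPm.
have hPii := ideal_of_ideal He hPi.
have hPc : forall x, P x -> corner e x by case: hPi => _ [_ [_ hC]].
have hAi := ideal_of_ideal He Ann_ideal.
have [P' [hP' hP'e]] := hmr hPii hAi hAP.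
pose P'c r := P' r /\ corner e r.
have hP'c : ideal P'c.
  case: hP' => h0 [hD hM]; split; first by split => //; exact: corner0.
  split; first by move=> x y [hx cx] [hy cy]; split; [exact: hD | exact: cornerD].
  by move=> r x [hx cx]; split; [exact: hM | exact: corner_mull].
have [a0 [hA0 ha0]] := Ann_nz.
have ha0P' : P'c a0.
  split; last by case: hA0.
  have := (proj1 (hP'e a0)) hA0; apply: ideal_mul_sub => // a b ha hb.
  by case: hP' => _ [_ hM]; rewrite mulrC; apply: hM.
have hsub : forall r, P'c r -> ideal_mul P'c P r.
  move=> r [hr hrc].
  have hAr : Ann r.
    split => // m hm; have [k [p [mm [hp ->]]]] := hall m hm.
    rewrite scaler_sumr big1 // => t _; rewrite scalerA.
    have hA : Ann (r * p t) by apply/hP'e; exact: ideal_mul1.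
    rewrite (scale_e He _ (corner_mull _ (hPc _ (hp t)))).
    by case: hA => _ ->; last exact: component_e.
  have [k [c [b [hcb ->]]]] := (proj1 (hP'e r)) hAr.
  exists k, (fun s => c s * e), b; split.
    move=> s; case: (hcb s) => hc hb; split => //; split; last exact: corner_me.
    by case: hP' => _ [_ hM]; rewrite mulrC; apply: hM.
  apply: eq_bigr => s _; case: (hcb s) => _ hb.
  by rewrite -mulrA (cornerK He (hPc _ hb)).
case: hPm => _ [hPe _]; apply: hPe.
apply: (CL He hdom hmr hP'c ha0P' _ ha0 hPi hsub).
by case: hA0.
Qed.

Lemma F8 P c (y : M) : corner_maximal e P -> corner e c -> ~ P c -> component e y ->
  ~ ideal_smul P y -> ~ ideal_smul P (c *: y).
Proof.
move=> hPm hc hPc hy hny hcy; apply: hny.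
have [d [p [hd [hp hed]]]] := max_gen He hPm hc hPc.
have hPii : ideal P by apply: (ideal_of_ideal He); case: hPm.
rewrite -(componentK He hy) hed scalerDl -scalerA.
apply: ideal_smulD; first exact: ideal_smulZ.
exact: ideal_smul1.
Qed.

Definition Cprop (I : R -> Prop) := exists z : M, component e z /\
  forall Q, corner_maximal e Q -> subs I Q -> ~ ideal_smul Q z.

Lemma C_step I : ideal_of e I -> subs Ann I ->
  (forall I', ideal_of e I' -> subs I I' -> ~ subs I' I -> Cprop I') -> Cprop I.
Proof.
move=> hI hAI IH.
case: (classic (I e)) => [hIe|hIe].
  exists 0; split; first exact: component0.
  by move=> Q [_ [hQe _]] hIQ; exfalso; apply: hQe; apply: hIQ.
have [P [hPm hIP]] := exists_max hN hI hIe.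
have hPi : ideal_of e P by case: hPm.
have hPii := ideal_of_ideal He hPi.
have hIi := ideal_of_ideal He hI.
have [I1 [hI1 hI1e]] := hmr hPii hIi hIP.
pose I1c r := I1 r /\ corner e r.
have hIc : forall x, I x -> corner e x by case: hI => _ [_ [_ hC]].
have hPc : forall x, P x -> corner e x by case: hPi => _ [_ [_ hC]].
have hI1c : ideal_of e I1c.
  case: hI1 => h0 [hD hM]; split; first by split => //; exact: corner0.
  split; first by move=> x y [hx cx] [hy cy]; split; [exact: hD | exact: cornerD].
  split; first by move=> r x _ [hx cx]; split; [exact: hM | exact: corner_mull].
  by move=> x [].
have hII1 : subs I I1c.
  move=> x hx; split; last exact: hIc.
  have := (proj1 (hI1e x)) hx; apply: ideal_mul_sub => // a b ha hb.
  by case: hI1 => _ [_ hM]; rewrite mulrC; apply: hM.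
have [a0 [hA0 ha0]] := Ann_nz.
have hstrict : ~ subs I1c I.
  move=> hsub; case: hPm => _ [hPe _]; apply: hPe.
  apply: (CL He hdom hmr hIi (hAI _ hA0) _ ha0 hPi); first by case: hA0.
  move=> x hx; have [k [a [b [hab ->]]]] := (proj1 (hI1e x)) hx.
  exists k, (fun t => a t * e), b; split.
    move=> t; case: (hab t) => ha hb; split => //; apply: hsub; split; last exact: corner_me.
    by case: hI1 => _ [_ hM]; rewrite mulrC; apply: hM.
  apply: eq_bigr => t _; case: (hab t) => _ hb.
  by rewrite -mulrA (cornerK He (hPc _ hb)).
have [z1 [hz1 Hz1]] := IH _ hI1c hII1 hstrict.
have hQcase : forall Q, corner_maximal e Q -> subs I Q -> subs I1c Q \/ (forall x, Q x <-> P x).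
  move=> Q hQm hIQ; case: (classic (subs I1c Q)) => [h|h]; [by left | right].
  apply: (max_prime He hQm hPm hI1) => // w hw; apply: hIQ; exact/hI1e.
case: (classic (subs I1c P)) => [hI1P|hI1P].
  exists z1; split => // Q hQm hIQ.
  case: (hQcase Q hQm hIQ) => [h|h]; first exact: Hz1.
  by apply: Hz1 => // x hx; apply/h; apply: hI1P.
have [c [[hc1 hcc] hPc']] : exists c, I1c c /\ ~ P c.
  by apply: NNPP => h; apply: hI1P => x hx; apply: NNPP => h'; apply: h; exists x.
case: (classic (ideal_smul P z1)) => [hz1P|hz1P]; last first.
  exists z1; split => // Q hQm hIQ.
  case: (hQcase Q hQm hIQ) => [h|h]; first exact: Hz1.
  by move=> hQ; apply: hz1P; apply: (ideal_smul_mono _ hQ) => x /h.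
have [y [hy hyP]] := F6 hPm (fun x hx => hIP _ (hAI _ hx)).
exists (z1 + c *: y); split; first by apply: componentD => //; exact: componentZ.
move=> Q hQm hIQ hzQ.
have hQi : ideal Q by apply: (ideal_of_ideal He); case: hQm.
case: (hQcase Q hQm hIQ) => [h|h].
  apply: (Hz1 Q hQm h).
  have -> : z1 = (z1 + c *: y) - c *: y by rewrite addrK.
  apply: ideal_smulB => //; apply: ideal_smul1; apply: h; by split.
apply: (F8 hPm hcc hPc' hy hyP).
have -> : c *: y = (z1 + c *: y) - z1 by rewrite (addrC z1) addrK.
have hPii' := hPii.
apply: ideal_smulB => //; apply: (ideal_smul_mono _ hzQ) => x /h //.
Qed.

Lemma C_all I : ideal_of e I -> subs Ann I -> Cprop I.
Proof.
move=> hI hAI; apply: NNPP => hno.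
have [J [[hJ [hAJ hCJ]] hmax]] := MEL hN
  (F := fun J => ideal_of e J /\ subs Ann J /\ ~ Cprop J)
  (ex_intro _ I (conj hI (conj hAI hno))) (fun J h => proj1 h).
apply: hCJ; apply: C_step => // I' hI' hJI' hnI'.
apply: NNPP => hC'; apply: hnI'; apply: hmax => //; split => //; split => //.
by move=> x hx; apply: hJI'; apply: hAJ.
Qed.

Lemma torsion_cyclic : exists x : M, component e x /\ forall m, component e m -> exists c, m = c *: x.
Proof.
have [z [hz Hz]] := C_all Ann_ideal (fun x h => h).
exists z; split => //.
case: (classic (Jx e z e)) => [[_ hJ]|hJe].
  move=> m hm; have [c hc] := hJ m hm; exists c; by rewrite -hc (componentK He hm).
have [P [hPm hJP]] := exists_max hN (Jx_ideal e z) hJe.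
exfalso; apply: (Hz P hPm).
  move=> x [hx Hx]; apply: hJP; split => // m hm; exists 0; by rewrite Hx // scale0r.
exact: (ideal_smul_mono _ (Jx_gen He hmm hz)).
Qed.

End DedMod.


Section TF.
Variables (R : comNzRingType) (M : lmodType R) (e : R).
Hypothesis He : e * e = e.
Hypothesis hdom : corner_domain e.
Hypothesis hmm : multiplication_module M.

Lemma tf_iso (x : M) : component e x -> (forall r, corner e r -> r *: x = 0 -> r = 0) ->
  exists I, ideal_of e I /\ nonzero_ideal I /\
    iso_on (V := R^o) (W := M) (corner e) I (@component R M e).
Proof.
move=> hx htf.
have he0 : e != 0 by case: hdom.
case: hdom => _ hd.
have [k [j [mm [hj hxs]]]] := Jx_gen He hmm hx.
have [t hjt] : exists t, j t != 0.
  apply: NNPP => h; move/eqP: he0; apply; apply: htf; first exact: corner_e.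
  rewrite (componentK He hx) hxs big1 // => t _.
  have -> : j t = 0 by apply/eqP; apply: NNPP => h'; apply: h; exists t; apply/negP.
  by rewrite scale0r.
have [hac haJ] := hj t.
move: (j t) hjt hac haJ => a hjt hac haJ.
pose T (w : M) := component e w /\ exists s, corner e s /\ s != 0 /\ s *: w = 0.
have hT : submodule T.
  split; first by split; [exact: component0 | exists e; split; [exact: corner_e|split => //; rewrite scaler0]].
  split.
    move=> w1 w2 [h1 [s1 [hs1 [hs1n hs1w]]]] [h2 [s2 [hs2 [hs2n hs2w]]]].
    split; first exact: componentD.
    exists (s1 * s2); split; first exact: corner_mulr.
    split.
      apply/eqP => h; case: (hd _ _ hs1 hs2 h) => /eqP; apply/negP => //.
    have e1 : (s1 * s2) *: w1 = 0 by rewrite mulrC -scalerA hs1w scaler0.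
    have e2 : (s1 * s2) *: w2 = 0 by rewrite -scalerA hs2w scaler0.
    by rewrite scalerDr e1 e2 addr0.
  move=> r w [h1 [s [hs [hsn hsw]]]]; split; first exact: componentZ.
  by exists s; split => //; split => //; rewrite scalerA mulrC -scalerA hsw scaler0.
have [I [hI hTI]] := hmm hT.
have hIe : forall i, I i -> i * e = 0.
  move=> i hi.
  have : T (i *: x).
    rewrite hxs scaler_sumr; apply: submodule_sum => // s.
    rewrite scalerA mulrC -scalerA.
    case: hT => _ [_ hM]; apply: hM; apply/hTI; exact: ideal_smul1.
  case=> _ [s [hs [hsn hsx]]].
  have hs' : s * (i * e) = 0.
    apply: htf; first by apply: corner_mulr; exact: hs.
    by rewrite -scalerA -scalerA (componentK He hx).
  case: (hd _ _ hs (corner_me e i) hs') => // h; by move/eqP: hsn.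
have htf' : forall y : M, component e y -> forall s, corner e s -> s != 0 -> s *: y = 0 -> y = 0.
  move=> y hy s hs hsn hsy.
  have : T y by split => //; exists s.
  move=> /hTI [k2 [i [m2 [hi hy2]]]].
  rewrite -(componentK He hy) hy2 scaler_sumr big1 // => u _.
  by rewrite scalerA mulrC hIe // scale0r.
have huniq : forall y1 y2 : M, component e y1 -> component e y2 -> a *: y1 = a *: y2 -> y1 = y2.
  move=> y1 y2 h1 h2 h; apply/eqP; rewrite -subr_eq0; apply/eqP.
  apply: (htf' _ (componentB h1 h2) _ hac hjt); by rewrite scalerBr h subrr.
pose K r := corner e r /\ exists y : M, component e y /\ a *: y = r *: x.
have hK : ideal_of e K.
  split; first by split; [exact: corner0 | exists 0; split; [exact: component0 | rewrite scaler0 scale0r]].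
  split.
    move=> r1 r2 [c1 [y1 [hy1 e1]]] [c2 [y2 [hy2 e2]]]; split; first exact: cornerD.
    by exists (y1 + y2); split; [exact: componentD | rewrite scalerDr e1 e2 scalerDl].
  split.
    move=> b r hb [c [y [hy ey]]]; split; first exact: corner_mull.
    exists (b *: y); split; first exact: componentZ.
    by rewrite scalerA (mulrC a b) -(scalerA b a) ey scalerA.
  by move=> r [].
pose f (r : R^o) : M := epsilon (inhabits 0) (fun y => component e y /\ a *: y = (r : R) *: x).
have hf : forall r, K r -> component e (f r) /\ a *: f r = r *: x.
  move=> r [_ hr]; apply: (epsilon_spec (inhabits 0) (fun y => component e y /\ a *: y = r *: x)).
  by case: hr => y hy; exists y.
exists K; split => //; split; first by exists a; split => //; split => //; exists x.
exists f; split; first by move=> r hr; case: (hf r hr).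
split.
  move=> r1 r2 h1 h2.
  have h12 : K (r1 + r2) by case: hK => _ [hD _]; apply: hD.
  case: (hf _ h1) => c1 e1; case: (hf _ h2) => c2 e2; case: (hf _ h12) => c12 e12.
  apply: huniq => //; first exact: componentD.
  by rewrite e12 scalerDr e1 e2 scalerDl.
split.
  move=> b r hb hr.
  have hbr : K (b * r) by case: hK => _ [_ [hM _]]; apply: hM.
  case: (hf _ hr) => c1 e1; case: (hf _ hbr) => c2 e2.
  apply: huniq => //; first exact: componentZ.
  by rewrite e2 scalerA (mulrC a b) -(scalerA b a) e1 scalerA.
split.
  move=> r1 r2 h1 h2 h.
  case: (hf _ h1) => c1 e1; case: (hf _ h2) => c2 e2.
  have hr1 : corner e r1 by case: h1.
  have hr2 : corner e r2 by case: h2.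
  apply/eqP; rewrite -subr_eq0; apply/eqP; apply: htf; first exact: cornerB.
  by rewrite scalerBl -e1 -e2 h subrr.
move=> y hy; have [c hc] := haJ y hy.
have hKc : K (c * e).
  split; first exact: corner_me.
  by exists y; split => //; rewrite hc -scalerA (componentK He hx).
exists (c * e); split => //; case: (hf _ hKc) => c1 e1.
apply: huniq => //; rewrite e1 hc -scalerA (componentK He hx) //.
Qed.
End TF.


Lemma good_of_iso (R : comNzRingType) (M : lmodType R) (e : R) (I : R -> Prop) :
  ideal_of e I -> iso_on (V := R^o) (W := M) (corner e) I (@component R M e) -> good_comp M e.
Proof.
move=> hI [f [hmap [hadd [hlin [_ hsurj]]]]].
exists I, f; split => //; split => //; split => //; split => //.
Qed.

Lemma good_of_quot (R : comNzRingType) (M : lmodType R) (e : R) (I : R -> Prop) :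
  quot_iso_on (V := R^o) (W := M) (corner e) (corner e) I (@component R M e) -> good_comp M e.
Proof.
move=> [f [hmap [hadd [hlin [_ hsurj]]]]].
exists (corner e), f; split; first exact: ideal_of_corner.
split => //; split => //; split => //.
Qed.

Theorem theorem1p2 (R : comNzRingType) (M : lmodType R) (n : nat) (e : 'I_n -> R) :
  multiplication_ring R ->
  finitely_many_minimal_primes R ->
  (forall i, e i * e i = e i) ->
  (forall i j, i != j -> e i * e j = 0) ->
  \sum_(i < n) e i = 1 ->
  (forall i, corner_dedekind (e i) \/ corner_artinian_local_pir (e i)) ->
  (multiplication_module M <->
   forall i : 'I_n,
     iso_on (V := R^o) (W := M) (corner (e i)) (corner (e i)) (@component R M (e i))
     \/ (exists I : R -> Prop, ideal_of (e i) I /\ nonzero_ideal I /\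
           quot_iso_on (V := R^o) (W := M) (corner (e i)) (corner (e i)) I
                       (@component R M (e i)))
     \/ (corner_dedekind (e i) /\
         exists I : R -> Prop, ideal_of (e i) I /\ nonzero_ideal I /\
           iso_on (V := R^o) (W := M) (corner (e i)) I (@component R M (e i)))).
Proof.
move=> hmr _ He _ hsum hcases; split.
  move=> hmm i; have Hei := He i.
  have fromcyc : forall x : M, component (e i) x ->
      (forall m, component (e i) m -> exists c, m = c *: x) ->
      iso_on (V := R^o) (W := M) (corner (e i)) (corner (e i)) (@component R M (e i))
      \/ (exists I : R -> Prop, ideal_of (e i) I /\ nonzero_ideal I /\
           quot_iso_on (V := R^o) (W := M) (corner (e i)) (corner (e i)) I
                       (@component R M (e i))).
    by move=> x hx hgen; have := cyclic_options Hei hx hgen.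
  case: (hcases i) => [hded|hloc]; last first.
    have [x [hx hgen]] := local_cyclic Hei hmm hloc.
    by case: (fromcyc x hx hgen) => h; [left | right; left].
  have [hdom [hN _]] := hded.
  case: (classic (exists x : M, component (e i) x /\
           forall r, corner (e i) r -> r *: x = 0 -> r = 0)) => [[x [hx htf]]|hno].
    by right; right; split => //; exact: (tf_iso Hei hdom hmm hx htf).
  have hT : forall x : M, component (e i) x ->
      exists s, corner (e i) s /\ s != 0 /\ s *: x = 0.
    move=> x hx; apply: NNPP => h; apply: hno; exists x; split => // r hr hrx.
    apply/eqP; apply: NNPP => h'; apply: h; exists r; split => //; split => //.
    exact/negP.
  have [x [hx hgen]] := torsion_cyclic Hei hdom hmr hN hmm hT.
  by case: (fromcyc x hx hgen) => h; [left | right; left].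
move=> hopts; apply: (mult_of_good hmr He hsum) => i.
case: (hopts i) => [h1|[[I [_ [_ h2]]]|[_ [I [hI [_ h3]]]]]].
- exact: (good_of_iso (ideal_of_corner (e i)) h1).
- exact: (good_of_quot h2).
- exact: (good_of_iso hI h3).
Qed.
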